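(* Under the setting below with $m\ge 3$, for every $\gamma=(\gamma_{12},\gamma_{13},\gamma_{23})\in\mathbb{C}^3$, \[s_{3m-2}\big(\mathcal{S}_3(D,\gamma)\big)\le \max\{\|M_1\|_2,\|M_2\|_2,\|M_3\|_2\}.\]
   Context: $A\in\mathbb{C}^{n\times n}$, $B\in\mathbb{C}^{n\times m}$, $C\in\mathbb{C}^{m\times n}$, $D\in\mathbb{C}^{m\times m}$; $\lambda_1,\lambda_2,\lambda_3$ are distinct complex numbers, none an eigenvalue of $A$. $s_j(\cdot)$ denotes the $j$-th largest singular value. Write $A_i^{-1}=(A-\lambda_iI_n)^{-1}$, $M_i=(D-\lambda_iI_m)-CA_i^{-1}B$, $N_{ij}=I_m+CA_i^{-1}A_j^{-1}B$, $P_{123}=CA_1^{-1}A_2^{-1}A_3^{-1}B$, and \[\mathcal{S}_3(D,\gamma)=\begin{bmatrix}M_1&\gamma_{12}N_{12}&\gamma_{13}N_{13}-\gamma_{12}\gamma_{23}P_{123}\\0&M_2&\gamma_{23}N_{23}\\0&0&M_3\end{bmatrix}.\] *)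

(* Defs.v *)
(* Complex numbers are modelled as R[i] (real_closed.complex)
   over a real closed field R; for R = the reals this is exactly C. *)
From HB Require Import structures.
From mathcomp Require Import all_boot all_order all_algebra.
From mathcomp Require Import complex.
Set Implicit Arguments. Unset Strict Implicit. Unset Printing Implicit Defensive.
Import Order.TTheory GRing.Theory Num.Theory.
Local Open Scope ring_scope.

Definition ctrmx (C : numClosedFieldType) p q (A : 'M[C]_(p, q)) : 'M[C]_(q, p) :=
  map_mx Num.conj A^T.

Lemma char_poly_split (C : closedFieldType) k (A : 'M[C]_k) :
  exists s : seq C, char_poly A == \prod_(z <- s) ('X - z%:P).
Proof.
have [r Hr] := closed_field_poly_normal (char_poly A).
by exists r; apply/eqP; rewrite {1}Hr (monicP (char_poly_monic A)) scale1r.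
Qed.

(* the eigenvalues of a square matrix, listed with algebraic multiplicity *)
Definition eigvals (C : numClosedFieldType) k (A : 'M[C]_k) : seq C :=
  xchoose (char_poly_split A).

Definition svals (C : numClosedFieldType) p q (A : 'M[C]_(p, q)) : seq C :=
  sort (fun x y => y <= x) [seq sqrtC z | z <- eigvals (ctrmx A *m A)].

(* s_j(A), the j-th largest singular value (1-indexed) *)
Definition singval (C : numClosedFieldType) p q (j : nat) (A : 'M[C]_(p, q)) : C :=
  nth 0 (svals A) j.-1.

Definition norm2 (C : numClosedFieldType) p q (A : 'M[C]_(p, q)) : C := singval 1 A.

Section S3.
Variables (R : rcfType) (n m : nat).
Local Notation C := (R[i]).
Variables (A : 'M[C]_n) (B : 'M[C]_(n, m)) (Cm : 'M[C]_(m, n)) (D : 'M[C]_m).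

Definition Ainv (l : C) : 'M[C]_n := invmx (A - l%:M).
Definition Mmat (l : C) : 'M[C]_m := (D - l%:M) - Cm *m Ainv l *m B.
Definition Nmat (li lj : C) : 'M[C]_m := 1%:M + Cm *m Ainv li *m Ainv lj *m B.
Definition Pmat (l1 l2 l3 : C) : 'M[C]_m :=
  Cm *m Ainv l1 *m Ainv l2 *m Ainv l3 *m B.

Definition S3 (l1 l2 l3 g12 g13 g23 : C) : 'M[C]_(m + (m + m)) :=
  block_mx (Mmat l1)
           (row_mx (g12 *: Nmat l1 l2) (g13 *: Nmat l1 l3 - (g12 * g23) *: Pmat l1 l2 l3))
           0
           (block_mx (Mmat l2) (g23 *: Nmat l2 l3) 0 (Mmat l3)).
End S3.

(* Main.v *)
Require Import Defs.
From HB Require Import structures.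
From mathcomp Require Import all_boot all_order all_algebra.
From mathcomp Require Import complex spectral sesquilinear.
From mathcomp Require Import zify.
Import Order.TTheory GRing.Theory Num.Theory.
Local Open Scope ring_scope.
Local Open Scope sesquilinear_scope.
Set Implicit Arguments. Unset Strict Implicit. Unset Printing Implicit Defensive.

Section Sort.
Variable C : numDomainType.
Let ge := (fun x y : C => y <= x).

Lemma sort_ge_sorted (s : seq C) : all (fun x => 0 <= x) s -> sorted ge (sort ge s).
Proof.
apply: (@sort_sorted_in _ [pred x : C | 0 <= x]) => x y /= x0 y0.
by rewrite /ge orbC real_leVge ?ger0_real.
Qed.

Lemma ge_trans : transitive ge.
Proof. by move=> y x z /= xy yz; rewrite /ge (le_trans yz xy). Qed.

Lemma sort_top (s : seq C) x : all (fun x => 0 <= x) s -> x \in s -> x <= nth 0 (sort ge s) 0.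
Proof.
move=> s0 xs; have := sort_ge_sorted s0.
have : x \in sort ge s by rewrite mem_sort.
case: (sort ge s) => [//|y t] /=; rewrite inE => /orP[/eqP -> _ //|xt].
by rewrite (path_sortedE ge_trans) => /andP[/allP /(_ x xt)].
Qed.

Lemma sort_count (s : seq C) c i : all (fun x => 0 <= x) s -> 0 <= c ->
  c < nth 0 (sort ge s) i -> (i < count (fun x => (c < x)%R) s)%N.
Proof.
move=> s0 c0 ci.
have iS : (i < size (sort ge s))%N.
  by rewrite ltnNge; apply/negP => /(nth_default 0) E; move: ci; rewrite E => /(le_lt_trans c0); rewrite ltxx.
have ps : perm_eq (sort ge s) s by rewrite perm_sort.
rewrite -(permP ps (fun x => (c < x)%R)).
rewrite -(cat_take_drop i.+1 (sort ge s)) count_cat.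
apply: (@leq_trans (count (fun x => (c < x)%R) (take i.+1 (sort ge s)))); last exact: leq_addr.
have -> : count (fun x => (c < x)%R) (take i.+1 (sort ge s)) = size (take i.+1 (sort ge s)).
  apply/eqP; rewrite -all_count; apply/(all_nthP 0) => l.
  rewrite size_takel // => li; rewrite nth_take //.
  apply: (lt_le_trans ci); have := sorted_leq_nth ge_trans (fun x => lexx x) 0 (sort_ge_sorted s0).
  by move=> /(_ l i); apply => //; rewrite inE // (leq_trans li).
by rewrite size_takel.
Qed.
End Sort.

Section Gen.
Variable C : numClosedFieldType.

Definition qf k (u : 'rV[C]_k) : C := (u *m u ^t*) 0 0.

Lemma qfE k (u : 'rV[C]_k) : qf u = \sum_j u 0 j * (u 0 j)^*.
Proof. by rewrite /qf mxE; apply: eq_bigr => j _; rewrite !mxE. Qed.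

Lemma qf_ge0 k (u : 'rV[C]_k) : 0 <= qf u.
Proof. by rewrite qfE sumr_ge0 // => j _; rewrite mul_conjC_ge0. Qed.

Lemma qf_gt0 k (u : 'rV[C]_k) : u != 0 -> 0 < qf u.
Proof.
move=> u0; suff /existsP[i ui] : [exists i, u 0 i != 0].
  rewrite qfE (bigD1 i) //= ltr_wpDr ?sumr_ge0 ?mul_conjC_gt0 //.
  by move=> j _; rewrite mul_conjC_ge0.
apply: contraNT u0; rewrite negb_exists => /forallP uN.
by apply/eqP/rowP => j; rewrite mxE; apply/eqP; rewrite -[_ == _]negbK uN.
Qed.

Lemma qf_unitary k (P : 'M[C]_k) (u : 'rV[C]_k) : P \is unitarymx ->
  qf (u *m P^t*) = qf u.
Proof.
move=> PU; rewrite /qf trmx_mul map_mxM trmxCK.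
by rewrite mulmxA mulmxKtV.
Qed.


Lemma char_poly_conj k (P D : 'M[C]_k) : P \in unitmx ->
  char_poly (invmx P *m D *m P) = char_poly D.
Proof.
move=> Pu; rewrite /char_poly.
have -> : char_poly_mx (invmx P *m D *m P) =
  map_mx polyC (invmx P) *m char_poly_mx D *m map_mx polyC P.
  rewrite /char_poly_mx mulmxBr mulmxBl -!map_mxM.
  congr (_ - _); rewrite mul_mx_scalar -scalemxAl -map_mxM mulVmx // map_mx1 scalemx1 //.
rewrite !det_mulmx mulrC mulrA -det_mulmx -map_mxM mulmxV //.
by rewrite map_mx1 det1 mul1r.
Qed.

Section X.
Variables (p k : nat) (X : 'M[C]_(p, k)).
Let H := X^t* *m X.
Let P := spectralmx H.
Let d := spectral_diag H.

Lemma H_herm : H \is hermsymmx.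
Proof.
apply/is_hermitianmxP; rewrite expr0 scale1r /H trmx_mul map_mxM.
by rewrite map_trmx trmxK -map_mx_comp (map_mx_id (@conjCK _)).
Qed.

Lemma P_unitary : P \is unitarymx.
Proof. exact: spectral_unitarymx. Qed.

Lemma H_decomp : H = P^t* *m diag_mx d *m P.
Proof.
have /orthomx_spectralP E := hermitian_normalmx H_herm.
by rewrite -invmx_unitary ?P_unitary.
Qed.


Lemma qf_X (u : 'rV[C]_k) :
  qf (u *m X^t*) = \sum_j d 0 j * ((u *m P^t*) 0 j * ((u *m P^t*) 0 j)^*).
Proof.
set w := u *m P^t*.
have -> : qf (u *m X^t*) = (w *m diag_mx d *m w^t*) 0 0.
  rewrite /qf trmx_mul map_mxM trmxCK /w trmx_mul map_mxM trmxCK.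
  by rewrite !mulmxA -(mulmxA u) -/H H_decomp !mulmxA.
rewrite mxE; apply: eq_bigr => j _.
by rewrite mul_mx_diag !mxE mulrCA mulrA.
Qed.

Lemma d_ge0 j : 0 <= d 0 j.
Proof.
have := qf_ge0 (row j P *m X^t*); rewrite qf_X.
have E : row j P *m P^t* = delta_mx 0 j.
  by rewrite -row_mul (unitarymxP P_unitary) rowE mulmx1.
rewrite E (bigD1 j) //= big1 ?addr0.
  by rewrite mxE !eqxx /= conjC1 !mulr1.
by move=> i ij; rewrite mxE (negbTE ij) andbF conjC0 !mulr0.
Qed.

Lemma char_poly_H : char_poly H = \prod_(j < k) ('X - (d 0 j)%:P).
Proof.
rewrite H_decomp -invmx_unitary ?P_unitary // char_poly_conj ?unitarymx_unit ?P_unitary //.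
by rewrite char_poly_trig ?diag_mx_is_trig //; apply: eq_bigr => j _; rewrite mxE eqxx mulr1n.
Qed.

Lemma eigvals_H : perm_eq (eigvals H) [seq d 0 j | j : 'I_k].
Proof.
apply: prod_XsubC_eq; rewrite big_image /=.
have /eqP <- := xchooseP (char_poly_split H).
by rewrite -char_poly_H.
Qed.

Lemma svals_nneg : all (fun x => 0 <= x) [seq sqrtC z | z <- eigvals H].
Proof.
apply/allP => x /mapP[z zE ->]; rewrite sqrtC_ge0.
move: zE; rewrite (perm_mem eigvals_H) => /mapP[j _ ->]; exact: d_ge0.
Qed.

Lemma svals_count (a : pred C) :
  count a [seq sqrtC z | z <- eigvals H] = #|[pred j | a (sqrtC (d 0 j))]|.
Proof.
rewrite (permP (perm_map sqrtC eigvals_H)) -map_comp.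
rewrite count_map cardE /enum_mem size_filter count_filter.
by apply: eq_count => x; rewrite /= !inE andbT.
Qed.

Lemma svals_mem j : sqrtC (d 0 j) \in [seq sqrtC z | z <- eigvals H].
Proof.
by apply: map_f; rewrite (perm_mem eigvals_H); apply: map_f; rewrite mem_enum.
Qed.

Lemma norm_bound (u : 'rV[C]_k) : qf (u *m X^t*) <= norm2 X ^+ 2 * qf u.
Proof.
rewrite qf_X -(qf_unitary u P_unitary) qfE mulr_sumr.
apply: ler_sum => j _; apply: ler_wpM2r; first by rewrite mul_conjC_ge0.
have T := sort_top svals_nneg (svals_mem j).
rewrite -[d 0 j]sqrtCK; apply: lerXn2r; rewrite ?nnegrE ?sqrtC_ge0 ?d_ge0 //.
by rewrite (le_trans _ T) ?sqrtC_ge0 ?d_ge0.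
Qed.

Lemma lower_bound (c : C) r (W : 'M[C]_(r, k)) :
  0 <= c -> W \is unitarymx ->
  (k < #|[pred j | (c < sqrtC (d 0 j))%R]| + r)%N ->
  exists2 u : 'rV_k, u != 0 & (u <= W)%MS && (c ^+ 2 * qf u < qf (u *m X^t*)).
Proof.
move=> c0 WU kI.
set I := [pred j | c < sqrtC (d 0 j)] in kI.
pose f := fun l : 'I_#|I| => enum_val l.
have fI l : c < sqrtC (d 0 (f l)) by have := enum_valP l.
pose R := rowsub f P.
have PP := unitarymxP P_unitary.
have RPE l j : (R *m P^t*) l j = (f l == j)%:R.
  have /matrixP/(_ (f l) j) := PP; rewrite !mxE => <-.
  by apply: eq_bigr => t _; rewrite !mxE.
have RU : R \is unitarymx.
  apply/unitarymxP/matrixP => l l'.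
  have /matrixP/(_ (f l) (f l')) := PP; rewrite !mxE (inj_eq (@enum_val_inj _ _)) => <-.
  by apply: eq_bigr => t _; rewrite !mxE.
have rk : (0 < \rank (R :&: W))%N.
  have := mxrank_sum_cap R W; rewrite (mxrank_unitary RU) (mxrank_unitary WU).
  have := rank_leq_col (R + W)%MS; lia.
pose M := (R :&: W)%MS.
have {}rk : (0 < \rank M)%N by [].

have [i ri] : exists i, row i M != 0.
  case: (pickP (fun i => row i M != 0)) => [i ri|none]; first by exists i.
  move: rk; rewrite lt0n mxrank_eq0 => /negP[]; apply/eqP/row_matrixP => i.
  by have := none i; move/negbFE/eqP; rewrite row0.
set u := row i M in ri.
have uR : (u <= R)%MS by apply: submx_trans (row_sub i M) (capmxSl R W).
have uW : (u <= W)%MS by apply: submx_trans (row_sub i M) (capmxSr R W).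
exists u => //; rewrite uW /=.
have [a ua] := submxP uR.
pose w := u *m P^t*.
have w0 j : ~~ I j -> w 0 j = 0.
  move=> jI; rewrite /w ua -mulmxA mxE big1 // => l _.
  rewrite RPE; case: eqP => [fl|]; last by rewrite mulr0.
  by move: jI; rewrite -fl /I /= fI.
have wnz : w != 0.
  apply: contraNneq ri => w0'; have : w *m P = u by rewrite /w mulmxKtV ?P_unitary.
  by rewrite w0' mul0mx => <-.
have [j0 wj0] : exists j0, w 0 j0 != 0.
  case: (pickP (fun j => w 0 j != 0)) => [j ?|none]; first by exists j.
  move: wnz => /negP[]; apply/eqP/rowP => j; rewrite [RHS]mxE.
  by have := none j; move/negbFE/eqP.
have dI j : I j -> c ^+ 2 < d 0 j.
  move=> /= cj; have := ltrXn2r 2 c0 cj; rewrite sqrtCK => ->; by [].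
rewrite -subr_gt0.
have -> : qf (u *m X^t*) - c ^+ 2 * qf u =
    \sum_j (d 0 j - c ^+ 2) * (w 0 j * (w 0 j)^*).
  rewrite qf_X -(qf_unitary u P_unitary) qfE mulr_sumr -sumrB.
  by apply: eq_bigr => j _; rewrite mulrBl.
have Ij0 : I j0 by apply: contraNT wj0 => /w0 ->.
rewrite (bigD1 j0) //= ltr_wpDr ?sumr_ge0 //.
  move=> j _; case: (boolP (I j)) => [Ij|/w0 ->]; last by rewrite mul0r mulr0.
  by rewrite mulr_ge0 ?mul_conjC_ge0 // subr_ge0 ltW // dI.
by rewrite mulr_gt0 ?mul_conjC_gt0 // subr_gt0 dI.
Qed.
End X.

Lemma singval_ge0 p k j (X : 'M[C]_(p, k)) : 0 <= singval j X.
Proof.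
rewrite /singval /svals; case: (ltnP j.-1 (size (sort (fun x y => y <= x)
   [seq sqrtC z | z <- eigvals (ctrmx X *m X)]))) => [lt|ge]; last by rewrite nth_default.
have := mem_nth 0 lt; rewrite mem_sort => /(allP (svals_nneg X)); exact.
Qed.

Lemma qf_row0 a b (x : 'rV[C]_a) : qf (row_mx x (0 : 'rV_b)) = qf x.
Proof.
by rewrite /qf tr_row_mx map_col_mx mul_row_col trmx0 map_mx0 mulmx0 addr0.
Qed.

Lemma block_main m (M1 : 'M[C]_m) (Xr : 'M[C]_(m, m + m)) (Y : 'M[C]_(m + m)) c :
  (3 <= m)%N -> 0 <= c -> norm2 M1 <= c ->
  singval (3 * m - 2) (block_mx M1 Xr 0 Y) <= c.
Proof.
move=> m3 c0 Mc; set S := block_mx M1 Xr 0 Y.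
rewrite real_leNgt ?ger0_real ?singval_ge0 //; apply/negP => cs.
have Hcnt := sort_count (svals_nneg S) c0 cs.
rewrite svals_count in Hcnt.
pose W : 'M[C]_(m, m + (m + m)) := row_mx 1%:M 0.
have WU : W \is unitarymx.
  apply/unitarymxP; rewrite /W tr_row_mx map_col_mx mul_row_col trmx0 map_mx0 mulmx0 addr0.
  by rewrite trmx1 map_mx1 mulmx1.
have [|u u0 /andP[uW ub]] := lower_bound (X := S) c0 WU.
  move: Hcnt; set z := #|_|; lia.
have [b bE] := submxP uW.
move: u0 ub; rewrite bE /W mul_mx_row mulmx1 mulmx0 => u0.
rewrite /S tr_block_mx map_block_mx mul_row_block !trmx0 !map_mx0 !mul0mx !addr0 mulmx0.
rewrite !qf_row0 => lt.
have := lt_le_trans lt (norm_bound M1 b).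
have : norm2 M1 ^+ 2 * qf b <= c ^+ 2 * qf b.
  apply: ler_wpM2r; first exact: qf_ge0.
  by apply: lerXn2r; rewrite ?nnegrE ?(le_trans _ Mc) ?singval_ge0.
by move=> H1 H2; have := lt_le_trans H2 H1; rewrite ltxx.
Qed.
End Gen.

Lemma max_l (C : numDomainType) (x y : C) : 0 <= x -> 0 <= y -> x <= Num.max x y.
Proof.
move=> x0 y0; rewrite /Num.max /Order.max; case: ifP => [/ltW //|].
by rewrite lexx.
Qed.

Lemma max_ge0 (C : numDomainType) (x y : C) : 0 <= x -> 0 <= y -> 0 <= Num.max x y.
Proof. by move=> x0 y0; rewrite /Num.max /Order.max; case: ifP. Qed.

Theorem mainTheorem4 (R : rcfType) (n m : nat)
  (A : 'M[R[i]]_n) (B : 'M[R[i]]_(n, m)) (C : 'M[R[i]]_(m, n)) (D : 'M[R[i]]_m)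
  (l1 l2 l3 : R[i]) :
  (3 <= m)%N ->
  l1 != l2 -> l1 != l3 -> l2 != l3 ->
  ~~ eigenvalue A l1 -> ~~ eigenvalue A l2 -> ~~ eigenvalue A l3 ->
  forall g12 g13 g23 : R[i],
  singval (3 * m - 2)%N (S3 A B C D l1 l2 l3 g12 g13 g23) <=
    Num.max (norm2 (Mmat A B C D l1))
            (Num.max (norm2 (Mmat A B C D l2)) (norm2 (Mmat A B C D l3))).
Proof.
move=> m3 _ _ _ _ _ _ g12 g13 g23.
apply: block_main => //; rewrite ?max_ge0 ?max_l ?singval_ge0 // max_ge0 ?singval_ge0 //.
Qed.
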